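(* Let $n\geq 2$ and let $G$ be the Coxeter group with generators $t_0,t_1,\dots,t_{n-1}$ and relations $t_j^2=1$ for all $j$; $(t_0t_2)^4=1$ (if $n\geq 3$); $(t_0t_j)^2=1$ for $3\leq j\leq n-1$; $(t_it_{i+1})^3=1$ for $1\leq i\leq n-2$; $(t_it_j)^2=1$ for $1\leq i,j\leq n-1$ with $|i-j|\geq 2$; and no relation between $t_0$ and $t_1$ (i.e. $m(t_0,t_1)=\infty$). Then the assignment $t_0\mapsto\sigma_{12}$, $t_i\mapsto\alpha_{(i,i+1)}$ ($1\leq i\leq n-1$) extends to a surjective homomorphism $G\to\mathrm{Aut}(W_n)$. Moreover, the subgroup of $\mathrm{Aut}(W_n)$ generated by $\{\sigma_{12}\}\cup\{\alpha_{(i,i+1)}\mid i=2,\dots,n-1\}$ is finite.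
   Context: $W_n=\langle s_1,\dots,s_n\mid s_1^2,\dots,s_n^2\rangle$. For $1\leq i\neq j\leq n$, $\sigma_{ij}\in\mathrm{Aut}(W_n)$ is defined by $\sigma_{ij}(s_j)=s_is_js_i$ and $\sigma_{ij}(s_k)=s_k$ for $k\neq j$. For $\pi\in\mathrm{Sym}(n)$, $\alpha_\pi\in\mathrm{Aut}(W_n)$ is defined by $\alpha_\pi(s_k)=s_{\pi(k)}$. *)

(* Defs.v *)
From HB Require Import structures.
From mathcomp Require Import all_boot all_fingroup.
Set Implicit Arguments. Unset Strict Implicit. Unset Printing Implicit Defensive.

(* Generators s_1,...,s_n are encoded (0-indexed) by 'I_n.  Elements of W_n
   are the reduced words (no two adjacent letters equal), the standard normal
   form in the free product of n copies of Z/2. *)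

Definition reducedb n (w : seq 'I_n) : bool := sorted (fun a b => a != b) w.

Definition push n (a : 'I_n) (s : seq 'I_n) : seq 'I_n :=
  match s with
  | b :: s' => if a == b then s' else a :: s
  | [::] => [:: a]
  end.

Definition red n (w : seq 'I_n) : seq 'I_n := foldr (@push n) [::] w.

Lemma red_reduced n (w : seq 'I_n) : reducedb (red w).
Proof.
rewrite /reducedb; elim: w => [|a w IH] //=.
case: (red w) IH => [|b s] //= Hs.
case: eqP => [_|/eqP ab]; first exact: (path_sorted Hs).
by rewrite /= ab Hs.
Qed.

Definition W n := {w : seq 'I_n | reducedb w}.

Definition mkW n (w : seq 'I_n) : W n := exist _ (red w) (red_reduced w).

Definition wmul n (x y : W n) : W n := mkW (sval x ++ sval y).

Definition wgen n (i : 'I_n) : W n := mkW [:: i].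

Definition is_aut n (f : W n -> W n) : Prop :=
  (forall x y, f (wmul x y) = wmul (f x) (f y)) /\ bijective f.

Definition sigma_map n (i j : 'I_n) (x : W n) : W n :=
  mkW (flatten (map (fun k => if k == j then [:: i; j; i] else [:: k]) (sval x))).

Definition alpha_map n (p : {perm 'I_n}) (x : W n) : W n :=
  mkW (map p (sval x)).

(* Generators t_0,...,t_{n-1} encoded by 'I_n (same indexing as the paper).
   Coxeter matrix m(i,j), None = infinity. *)
Definition coxm (i j : nat) : option nat :=
  if i == j then Some 1
  else if (i == 0) && (j == 1) || (i == 1) && (j == 0) then None
  else if (i == 0) && (j == 2) || (i == 2) && (j == 0) then Some 4
  else if (i == 0) || (j == 0) then Some 2          (* t_0 with t_j, j >= 3 *)
  else if (i == j.+1) || (j == i.+1) then Some 3    (* adjacent, both >= 1 *)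
  else Some 2.                                      (* |i-j| >= 2, both >= 1 *)

Inductive relator n : seq 'I_n -> Prop :=
  | rel_sq (j : 'I_n) : relator [:: j; j]
  | rel_cox (i j : 'I_n) (k : nat) :
      i != j -> coxm i j = Some k -> relator (flatten (nseq k [:: i; j])).

(* the congruence on words defining G (words in the t_j; since all t_j are
   involutions, G is the quotient of the free monoid by this congruence) *)
Inductive cox_eq n : seq 'I_n -> seq 'I_n -> Prop :=
  | ce_refl u : cox_eq u u
  | ce_sym u v : cox_eq u v -> cox_eq v u
  | ce_trans u v w : cox_eq u v -> cox_eq v w -> cox_eq u w
  | ce_rel u r v : relator r -> cox_eq (u ++ r ++ v) (u ++ v).

(* t_0 |-> sigma_{12}, t_k |-> alpha_{(k,k+1)} (paper's 1-indexed s's),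
   i.e. 0-indexed: sigma (0,1), tperm (k-1) k. *)
Definition gen_img m (k : 'I_m.+2) : W m.+2 -> W m.+2 :=
  if val k == 0 then sigma_map ord0 (inord 1)
  else alpha_map (tperm (inord k.-1) k).

Definition ev m (u : seq 'I_m.+2) : W m.+2 -> W m.+2 :=
  foldr (fun k f => gen_img k \o f) id u.

(* Main.v *)
Require Import Defs.
From HB Require Import structures.
From mathcomp Require Import all_boot all_fingroup zify.
Set Implicit Arguments. Unset Strict Implicit. Unset Printing Implicit Defensive.

Lemma reduced_cons n (a : 'I_n) s :
  reducedb (a :: s) = reducedb s && (if s is b :: _ then a != b else true).
Proof. by case: s => [|b s] //=; rewrite andbC. Qed.

Lemma reduced_red_id n (s : seq 'I_n) : reducedb s -> red s = s.
Proof.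
elim: s => [|a s IH] // Hs.
rewrite /= IH; last by move: Hs; rewrite reduced_cons => /andP[].
move: Hs; rewrite reduced_cons => /andP[_].
by case: s {IH} => [|b s] //= /negbTE ->.
Qed.

Lemma red_idem n (s : seq 'I_n) : red (red s) = red s.
Proof. exact/reduced_red_id/red_reduced. Qed.

Lemma push_push n (a : 'I_n) t : reducedb t -> push a (push a t) = t.
Proof.
case: t => [|b t] /=; first by rewrite eqxx.
case: eqP => [<-|/eqP ab] /=.
  case: t => [|c t] /=; first by [].
  by case/andP => /negbTE ->.
by rewrite eqxx.
Qed.

Lemma red_push_cat n (a : 'I_n) s v : red (push a s ++ v) = push a (red (s ++ v)).
Proof.
case: s => [|b s] //=.
case: eqP => [<-|_] //=.
by rewrite push_push // red_reduced.
Qed.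

Lemma red_catr n (u v : seq 'I_n) : red (u ++ red v) = red (u ++ v).
Proof. by elim: u => [|a u IH] /=; [apply: red_idem | rewrite IH]. Qed.

Lemma red_catl n (u v : seq 'I_n) : red (red u ++ v) = red (u ++ v).
Proof. by elim: u => [|a u IH] //=; rewrite red_push_cat IH. Qed.

Lemma red_congr n (a b c c' : seq 'I_n) :
  red c = red c' -> red (a ++ c ++ b) = red (a ++ c' ++ b).
Proof.
by move=> H; rewrite -(@red_catr _ a (c ++ b)) -(@red_catl _ c b) H red_catl red_catr.
Qed.

Lemma red_rev_cancel n (t : seq 'I_n) : red (rev t ++ t) = [::].
Proof.
elim: t => [|x t IH] //.
rewrite rev_cons -cats1 -catA /=.
have -> : red (rev t ++ x :: x :: t) = red (rev t ++ [::] ++ t).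
  by apply: (@red_congr _ _ _ [:: x; x]) => /=; rewrite eqxx.
by [].
Qed.

Lemma red_cancel_rev n (t : seq 'I_n) : red (t ++ rev t) = [::].
Proof. by rewrite -{1}(revK t) red_rev_cancel. Qed.

Lemma size_push n (a : 'I_n) s : size (push a s) <= (size s).+1.
Proof. by case: s => [|b s] //=; case: eqP => //= _; lia. Qed.

Lemma size_red n (s : seq 'I_n) : size (red s) <= size s.
Proof.
elim: s => [|a s IH] //=.
have H := size_push a (red s); by apply: (leq_trans H); rewrite ltnS.
Qed.

Lemma red_cat_reduced n (s t : seq 'I_n) :
  reducedb (s ++ t) -> red (s ++ t) = s ++ t.
Proof. exact: reduced_red_id. Qed.

Lemma W_eq n (x y : W n) : sval x = sval y -> x = y.
Proof.
case: x => x Hx; case: y => y Hy /= E; subst y.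
by rewrite (bool_irrelevance Hx Hy).
Qed.

Lemma mkW_val n (x : W n) : mkW (sval x) = x.
Proof. by apply: W_eq; rewrite /= reduced_red_id //; case: x. Qed.

Lemma wmul_mkW n (a b : seq 'I_n) : wmul (mkW a) (mkW b) = mkW (a ++ b).
Proof. by apply: W_eq; rewrite /= red_catl red_catr. Qed.

Lemma wmulA n (x y z : W n) : wmul x (wmul y z) = wmul (wmul x y) z.
Proof.
rewrite -(mkW_val x) -(mkW_val y) -(mkW_val z) !wmul_mkW.
by rewrite catA.
Qed.

Definition we n : W n := mkW [::].
Definition winv n (x : W n) : W n := mkW (rev (sval x)).

Lemma wmul1 n (x : W n) : wmul (@we n) x = x.
Proof. by rewrite -(mkW_val x) wmul_mkW. Qed.
Lemma wmulV n (x : W n) : wmul (winv x) x = @we n.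
Proof.
by rewrite /winv -{2}(mkW_val x) wmul_mkW; apply: W_eq; rewrite /= red_rev_cancel.
Qed.

Lemma widem n (z : W n) : wmul z z = z -> z = @we n.
Proof.
move=> H.
have : wmul (winv z) (wmul z z) = wmul (winv z) z by rewrite H.
by rewrite wmulA wmulV wmul1 => ->.
Qed.

Lemma mkW_cons n (a : 'I_n) s : mkW (a :: s) = wmul (wgen a) (mkW s).
Proof. by rewrite /wgen wmul_mkW. Qed.

Definition sub n (phi : 'I_n -> seq 'I_n) (x : W n) : W n :=
  mkW (flatten (map phi (sval x))).
Definition good n (phi : 'I_n -> seq 'I_n) := forall k, red (phi k ++ phi k) = [::].

Lemma red_flat_push n (phi : 'I_n -> seq 'I_n) a s : good phi ->
  red (flatten (map phi (push a s))) = red (phi a ++ flatten (map phi s)).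
Proof.
move=> Hg; case: s => [|b s] //=.
case: eqP => [<-|_] //=.
rewrite catA -[red (flatten _)]/(red ([::] ++ [::] ++ flatten (map phi s))).
by symmetry; rewrite -[_ ++ flatten _]cat0s; apply: red_congr; rewrite Hg.
Qed.

Lemma red_flat_red n (phi : 'I_n -> seq 'I_n) w : good phi ->
  red (flatten (map phi (red w))) = red (flatten (map phi w)).
Proof.
move=> Hg; elim: w => [|a w IH] //=.
rewrite red_flat_push // -red_catr IH red_catr //.
Qed.

Lemma flat_cat n (phi : 'I_n -> seq 'I_n) s t :
  flatten (map phi (s ++ t)) = flatten (map phi s) ++ flatten (map phi t).
Proof. by rewrite map_cat flatten_cat. Qed.

Lemma sub_hom n (phi : 'I_n -> seq 'I_n) x y : good phi ->
  sub phi (wmul x y) = wmul (sub phi x) (sub phi y).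
Proof.
move=> Hg; apply: W_eq => /=.
by rewrite red_flat_red // red_catl red_catr flat_cat.
Qed.

Lemma sub_mkW n (phi : 'I_n -> seq 'I_n) s : good phi ->
  sub phi (mkW s) = mkW (flatten (map phi s)).
Proof. by move=> Hg; apply: W_eq => /=; rewrite red_flat_red. Qed.

Lemma flat_flat n (phi psi : 'I_n -> seq 'I_n) s :
  flatten (map phi (flatten (map psi s))) =
  flatten (map (fun k => flatten (map phi (psi k))) s).
Proof. by elim: s => [|a s IH] //=; rewrite flat_cat IH. Qed.

Lemma sub_comp n (phi psi : 'I_n -> seq 'I_n) x : good phi ->
  sub phi (sub psi x) = sub (fun k => flatten (map phi (psi k))) x.
Proof. by move=> Hg; apply: W_eq => /=; rewrite red_flat_red // flat_flat. Qed.

Lemma red_flat_ext n (phi psi : 'I_n -> seq 'I_n) s :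
  (forall k, red (phi k) = red (psi k)) ->
  red (flatten (map phi s)) = red (flatten (map psi s)).
Proof.
move=> H; elim: s => [|a s IH] //=.
by rewrite -red_catl -red_catr IH H red_catl red_catr.
Qed.

Lemma sub_ext n (phi psi : 'I_n -> seq 'I_n) x :
  (forall k, red (phi k) = red (psi k)) -> sub phi x = sub psi x.
Proof. by move=> H; apply: W_eq => /=; rewrite (red_flat_ext _ H). Qed.

Lemma sub_id n (x : W n) : sub (fun k => [:: k]) x = x.
Proof. by rewrite /sub flatten_seq1 mkW_val. Qed.

Lemma good_comp n (phi psi : 'I_n -> seq 'I_n) : good phi -> good psi ->
  good (fun k => flatten (map phi (psi k))).
Proof.
move=> Hp Hq k; rewrite -flat_cat -red_flat_red // Hq //.
Qed.

Ltac rsimp := repeat (progress (rewrite /=) || rewrite eqxx ||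
  match goal with
  | H : is_true (?a != ?b) |- context [?a == ?b] => rewrite (negbTE H)
  | H : is_true (?a != ?b) |- context [?b == ?a] => rewrite [b == a]eq_sym (negbTE H)
  end).

Definition sigf n (i j : 'I_n) k := if k == j then [:: i; j; i] else [:: k].

Lemma sigmaE n (i j : 'I_n) x : sigma_map i j x = sub (sigf i j) x.
Proof. by []. Qed.

Lemma alphaE n (p : {perm 'I_n}) x : alpha_map p x = sub (fun k => [:: p k]) x.
Proof. by rewrite /alpha_map /sub flatten_map1. Qed.

Lemma good_sig n (i j : 'I_n) : good (sigf i j).
Proof.
move=> k; rewrite /sigf; case: eqP => _ /=; last by rewrite eqxx.
case: (eqVneq i j) => [->|/negbTE ij]; first by do 6 rewrite /= ?eqxx.
by do 6 rewrite /= ?eqxx ?ij ?(eq_sym j i) ?ij.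
Qed.

Lemma good_alpha n (p : {perm 'I_n}) : good (fun k => [:: p k]).
Proof. by move=> k /=; rewrite eqxx. Qed.

Lemma sig_inv n (i j : 'I_n) x : i != j -> sigma_map i j (sigma_map i j x) = x.
Proof.
move=> ij; rewrite !sigmaE sub_comp; last exact: good_sig.
transitivity (sub (fun k => [:: k]) x); last exact: sub_id.
apply: sub_ext => k; rewrite /sigf; case: (eqVneq k j) => [->|kj] /=.
  by rsimp.
by rsimp.
Qed.

Lemma alpha_comp n (p q : {perm 'I_n}) x :
  alpha_map p (alpha_map q x) = alpha_map (q * p)%g x.
Proof.
rewrite !alphaE sub_comp; last exact: good_alpha.
by apply: sub_ext => k /=; rewrite permM.
Qed.

Lemma alpha1 n (x : W n) : alpha_map 1%g x = x.
Proof.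
rewrite alphaE; transitivity (sub (fun k => [:: k]) x); last exact: sub_id.
by apply: sub_ext => k; rewrite perm1.
Qed.

Lemma alpha_sig n (p : {perm 'I_n}) i j x :
  alpha_map p (sigma_map i j x) = sigma_map (p i) (p j) (alpha_map p x).
Proof.
rewrite !alphaE !sigmaE !sub_comp ?good_alpha ?good_sig //; try exact: good_alpha; try exact: good_sig.
apply: sub_ext => k /=; rewrite /sigf (inj_eq perm_inj).
by case: eqP.
Qed.

Lemma sig_comm n (i j l : 'I_n) x : i != j -> i != l -> j != l ->
  sigma_map i j (sigma_map i l x) = sigma_map i l (sigma_map i j x).
Proof.
move=> ij il jl; rewrite !sigmaE !sub_comp; try exact: good_sig.
apply: sub_ext => k /=; rewrite /sigf.
case: (eqVneq k l) => kl; case: (eqVneq k j) => kj; subst => //; rsimp => //.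
Qed.



Lemma tpermE (T : finType) (x y z : T) : tperm x y z = if z == x then y else if z == y then x else z.
Proof. by case: tpermP => [->|->|/eqP/negbTE -> /eqP/negbTE ->]; rewrite ?eqxx //; case: eqP. Qed.

Lemma tperm3 (T : finType) (x y z : T) : x != y -> y != z -> x != z ->
  ((tperm y z * tperm x y) ^+ 3 = 1)%g.
Proof.
move=> xy yz xz; apply/permP => w.
rewrite !expgS expg0 mulg1 !permM perm1.
case: (eqVneq w x) => [->|wx]; [|case: (eqVneq w y) => [->|wy]; [|case: (eqVneq w z) => [->|wz]]];
  by rewrite ?tpermE; rsimp; rewrite ?tpermE; rsimp; rewrite ?tpermE; rsimp;
  rewrite ?tpermE; rsimp; rewrite ?tpermE; rsimp; rewrite ?tpermE; rsimp.
Qed.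

Lemma tperm22 (T : finType) (x y z t : T) : x != y -> x != z -> x != t ->
  y != z -> y != t -> z != t ->
  ((tperm z t * tperm x y) ^+ 2 = 1)%g.
Proof.
move=> xy xz xt yz yt zt; apply/permP => w.
rewrite !expgS expg0 mulg1 !permM perm1.
case: (eqVneq w x) => [->|wx]; [|case: (eqVneq w y) => [->|wy]; [|case: (eqVneq w z) => [->|wz];
 [|case: (eqVneq w t) => [->|wt]]]];
  by rewrite ?tpermE; rsimp; rewrite ?tpermE; rsimp; rewrite ?tpermE; rsimp;
  rewrite ?tpermE; rsimp.
Qed.

Lemma val_one m : nat_of_ord (inord 1 : 'I_m.+2) = 1.
Proof. by rewrite inordK. Qed.

Lemma ord0_one m : (ord0 : 'I_m.+2) != inord 1.
Proof. by apply/eqP => /(f_equal (@nat_of_ord _)); rewrite val_one. Qed.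

Lemma genE0 m (k : 'I_m.+2) x : nat_of_ord k = 0 -> gen_img k x = sigma_map ord0 (inord 1) x.
Proof. by move=> H; rewrite /gen_img; have -> : (val k == 0) = true by apply/eqP. Qed.

Lemma genEs m (k : 'I_m.+2) x : nat_of_ord k != 0 ->
  gen_img k x = alpha_map (tperm (inord k.-1) k) x.
Proof. by move=> H; rewrite /gen_img; have -> : (val k == 0) = false by apply/negbTE. Qed.

Lemma gen_inv m (k : 'I_m.+2) x : gen_img k (gen_img k x) = x.
Proof.
case: (eqVneq (nat_of_ord k) 0) => H.
  by rewrite !genE0 // sig_inv // ord0_one.
by rewrite !genEs // alpha_comp tperm2 alpha1.
Qed.

Lemma gen_hom m (k : 'I_m.+2) x y : gen_img k (wmul x y) = wmul (gen_img k x) (gen_img k y).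
Proof.
case: (eqVneq (nat_of_ord k) 0) => H.
  by rewrite !genE0 // !sigmaE sub_hom //; apply: good_sig.
by rewrite !genEs // !alphaE sub_hom //; apply: good_alpha.
Qed.

Lemma is_aut_inv n (f : W n -> W n) :
  (forall x y, f (wmul x y) = wmul (f x) (f y)) -> (forall x, f (f x) = x) -> is_aut f.
Proof. by move=> H1 H2; split => //; exists f. Qed.

Lemma part1 m (k : 'I_m.+2) : is_aut (gen_img k).
Proof. apply: is_aut_inv; [exact: gen_hom | exact: gen_inv]. Qed.

Lemma ev_cons m (k : 'I_m.+2) u x : ev (k :: u) x = gen_img k (ev u x).
Proof. by []. Qed.

Lemma ev_cat m (u v : seq 'I_m.+2) x : ev (u ++ v) x = ev u (ev v x).
Proof. by elim: u => [|a u IH] //=; rewrite /= IH. Qed.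

Lemma ev_nseq m (i j : 'I_m.+2) k x :
  ev (flatten (nseq k [:: i; j])) x = iter k (fun y => gen_img i (gen_img j y)) x.
Proof.
elim: k => [|k IH] //=.
by rewrite -IH.
Qed.

Lemma iter_conj T (f g h : T -> T) k y : (forall y, f (g y) = g (h y)) ->
  iter k f (g y) = g (iter k h y).
Proof. by move=> H; elim: k => [|k IH] //=; rewrite IH H. Qed.

Lemma iter_swap m (i j : 'I_m.+2) k :
  (forall x, iter k (fun y => gen_img i (gen_img j y)) x = x) ->
  (forall x, iter k (fun y => gen_img j (gen_img i y)) x = x).
Proof.
move=> H x.
rewrite -{1}(gen_inv j x) (@iter_conj _ _ _ (fun y => gen_img i (gen_img j y))) //.
by rewrite H gen_inv.
Qed.

Lemma iter_alpha n (p : {perm 'I_n}) k x :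
  iter k (fun y => alpha_map p y) x = alpha_map (p ^+ k)%g x.
Proof.
elim: k => [|k IH] /=; first by rewrite expg0 alpha1.
by rewrite IH alpha_comp expgSr.
Qed.

Lemma coxmC a b : coxm a b = coxm b a.
Proof.
rewrite /coxm eq_sym; case: eqP => // _.
by case: a => [|[|[|a]]]; case: b => [|[|[|b]]] //=; rewrite orbC.
Qed.

Lemma val_inord_pred m (k : 'I_m.+2) : nat_of_ord (inord k.-1 : 'I_m.+2) = k.-1.
Proof. by rewrite inordK //; have := ltn_ord k; lia. Qed.

Lemma ord_neq m (a b : 'I_m.+2) : nat_of_ord a != nat_of_ord b -> a != b.
Proof. by apply: contra => /eqP ->. Qed.

Lemma rel_cox_lt m (i j : 'I_m.+2) k : nat_of_ord i < nat_of_ord j -> coxm i j = Some k ->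
  forall x, iter k (fun y => gen_img i (gen_img j y)) x = x.
Proof.
move=> ij.
case: (eqVneq (nat_of_ord i) 0) => Hi0.
  have -> : i = ord0 by apply: val_inj; rewrite /=.
  have Hj : nat_of_ord j != 0 by lia.
  rewrite /coxm /=.
  case: (eqVneq (nat_of_ord j) 1) => Hj1; first by rewrite Hj1.
  pose t : {perm 'I_m.+2} := tperm (inord j.-1) j.
  have tj : val (inord j.-1 : 'I_m.+2) = j.-1 by apply: val_inord_pred.
  case: (eqVneq (nat_of_ord j) 2) => Hj2.
    rewrite Hj2 /= => [[<-]] x /=.
    rewrite !(@genE0 _ ord0) // !(@genEs _ j) //.
    have t0 : t ord0 = ord0.
      by rewrite /t tpermD //; apply: ord_neq; rewrite ?tj /=; lia.
    have t1 : t (inord 1) = j.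
      have -> : (inord 1 : 'I_m.+2) = inord j.-1 by apply: val_inj; rewrite /=; rewrite tj val_one; lia.
      by rewrite /t tpermL.
    have ts : forall y, alpha_map t (sigma_map ord0 (inord 1) y) = sigma_map ord0 j (alpha_map t y).
      by move=> y; rewrite alpha_sig t0 t1.
    have ta : forall y, alpha_map t (alpha_map t y) = y.
      by move=> y; rewrite alpha_comp tperm2 alpha1.
    rewrite alpha_sig -/t t0 t1 ta alpha_sig t0 t1 ta.
    have o1j : (inord 1 : 'I_m.+2) != j by apply: ord_neq; rewrite val_one; lia.
    have o0j : (ord0 : 'I_m.+2) != j by apply: ord_neq; rewrite /=; lia.
    rewrite (@sig_comm _ ord0 j (inord 1)) ?ord0_one // 1?eq_sym //.
    by rewrite sig_inv ?ord0_one // sig_inv.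
  have Hj3 : 3 <= nat_of_ord j by lia.
  have -> : (0 == nat_of_ord j) = false by rewrite eq_sym; apply/negbTE.
  rewrite /= => [[<-]] x /=.
  rewrite !(@genE0 _ ord0) // !(@genEs _ j) //.
  have t0 : t ord0 = ord0.
    by rewrite /t tpermD //; apply: ord_neq; rewrite ?tj /=; lia.
  have t1 : t (inord 1) = inord 1.
    by rewrite /t tpermD //; apply: ord_neq; rewrite ?tj val_one /=; lia.
  by rewrite alpha_sig t0 t1 alpha_comp tperm2 alpha1 sig_inv ?ord0_one.
have Hj0 : nat_of_ord j != 0 by lia.
rewrite /coxm.
have -> : (nat_of_ord i == nat_of_ord j) = false by apply/eqP; lia.
rewrite (negbTE Hi0) (negbTE Hj0) /=.
set ti := tperm (inord i.-1) i; set tj := tperm (inord j.-1) j.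
have vi := val_inord_pred i; have vj := val_inord_pred j.
have E : forall x, gen_img i (gen_img j x) = alpha_map (tj * ti)%g x.
  by move=> x; rewrite !genEs // alpha_comp.
case: (eqVneq (nat_of_ord j) (nat_of_ord i).+1) => Hij.
  rewrite !andbF orbT /= => [[<-]] x.
  rewrite (eq_iter E) iter_alpha.
  have ji : (inord j.-1 : 'I_m.+2) = i by apply: val_inj; rewrite /=; rewrite vj; lia.
  rewrite /ti /tj ji tperm3 ?alpha1 //; apply: ord_neq; rewrite ?vi; lia.
have -> : (nat_of_ord i == (nat_of_ord j).+1) = false by apply/eqP; lia.
rewrite !andbF /= => [[<-]] x.
rewrite (eq_iter E) iter_alpha /ti /tj tperm22 ?alpha1 //; apply: ord_neq; rewrite ?vi ?vj; lia.
Qed.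

Lemma rel_ok m (r : seq 'I_m.+2) : relator r -> forall x, ev r x = x.
Proof.
case => [j|i j k ij H] x; first by rewrite /= gen_inv.
rewrite ev_nseq.
have [lt|gt] : nat_of_ord i < nat_of_ord j \/ nat_of_ord j < nat_of_ord i.
  by move: ij; rewrite -(inj_eq val_inj) /=; lia.
  exact: rel_cox_lt.
apply: iter_swap; apply: rel_cox_lt => //; by rewrite coxmC.
Qed.

Lemma part2 m (u v : seq 'I_m.+2) : cox_eq u v -> forall x, ev u x = ev v x.
Proof.
elim => [w x|a b _ IH x|a b c _ IH1 _ IH2 x|a r b Hr x] //.
- by rewrite IH1 IH2.
- by rewrite !ev_cat (rel_ok Hr).
Qed.

Definition sigSf m (S : {set 'I_m.+2}) (k : 'I_m.+2) : seq 'I_m.+2 :=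
  if k \in S then [:: ord0; k; ord0] else [:: k].

Lemma good_sigS m (S : {set 'I_m.+2}) : good (sigSf S).
Proof.
move=> k; rewrite /sigSf; case: (k \in S); last by rewrite /= eqxx.
by case: (eqVneq k ord0) => [->|k0]; rsimp.
Qed.

Definition sigS m (S : {set 'I_m.+2}) x := sub (sigSf S) x.

Lemma sigS0 m (x : W m.+2) : sigS set0 x = x.
Proof.
rewrite /sigS; transitivity (sub (fun k => [:: k]) x); last exact: sub_id.
by apply: sub_ext => k; rewrite /sigSf inE.
Qed.

Lemma sig01_sigS m (S : {set 'I_m.+2}) x :
  sigma_map ord0 (inord 1) (sigS S x) =
  sigS (if inord 1 \in S then S :\ inord 1 else inord 1 |: S) x.
Proof.
rewrite sigmaE /sigS sub_comp; last exact: good_sig.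
have o1 := ord0_one m.
apply: sub_ext => k; rewrite /sigSf /sigf.
case H1: (inord 1 \in S); case: (eqVneq k (inord 1)) => [->|k1];
  rewrite ?in_setD1 ?in_setU1 ?eqxx ?H1 ?(negbTE k1) /=; by try case: (k \in S); rsimp.
Qed.


Lemma alpha_sigS m (t : {perm 'I_m.+2}) S x : t ord0 = ord0 ->
  alpha_map t (sigS S x) = sigS (t @: S) (alpha_map t x).
Proof.
move=> t0; rewrite !alphaE /sigS !sub_comp; try exact: good_alpha; try exact: good_sigS.
apply: sub_ext => k; rewrite /sigSf /= (mem_imset _ _ (@perm_inj _ t)).
by case: (k \in S) => /=; rewrite ?t0.
Qed.

Lemma fin_struct m (u : seq 'I_m.+2) : (forall k, k \in u -> nat_of_ord k != 1) ->
  exists S p, forall x, ev u x = sigS S (alpha_map p x).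
Proof.
elim: u => [|k u IH] Hu.
  by exists set0, 1%g => x; rewrite alpha1 sigS0.
have [S [p Hp]] : exists S p, forall x, ev u x = sigS S (alpha_map p x).
  by apply: IH => l Hl; apply: Hu; rewrite inE Hl orbT.
have Hk : nat_of_ord k != 1 by apply: Hu; rewrite inE eqxx.
case: (eqVneq (nat_of_ord k) 0) => Hk0.
  exists (if inord 1 \in S then S :\ inord 1 else inord 1 |: S), p => x.
  by rewrite ev_cons Hp genE0 // sig01_sigS.
pose t : {perm 'I_m.+2} := tperm (inord k.-1) k.
exists (t @: S), (p * t)%g => x.
rewrite ev_cons Hp genEs // -/t alpha_sigS ?alpha_comp //.
rewrite /t tpermD //; apply: ord_neq; rewrite ?val_inord_pred /=; lia.
Qed.

Lemma part4 m : exists L : seq (W m.+2 -> W m.+2),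
     forall u : seq 'I_m.+2, (forall k, k \in u -> nat_of_ord k != 1) ->
       exists2 i, i < size L & forall x, ev u x = nth id L i x.
Proof.
pose e := enum {: {set 'I_m.+2} * {perm 'I_m.+2}}.
pose F := fun q : {set 'I_m.+2} * {perm 'I_m.+2} => fun x => sigS q.1 (alpha_map q.2 x).
exists (map F e) => u Hu.
have [S [p Hp]] := fin_struct Hu.
have mem : (S, p) \in e by rewrite mem_enum.
exists (index (S, p) e); first by rewrite size_map index_mem.
by move=> x; rewrite (nth_map (S, p)) ?index_mem // nth_index.
Qed.

Fixpoint lcp n (s t : seq 'I_n) : nat :=
  match s, t with
  | x :: s', y :: t' => if x == y then (lcp s' t').+1 else 0
  | _, _ => 0
  end.

Lemma lcp_take n (s t : seq 'I_n) : take (lcp s t) s = take (lcp s t) t.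
Proof.
elim: s t => [|x s IH] [|y t] //=.
by case: eqP => [->|_] //=; rewrite IH.
Qed.

Lemma lcp_max n (s t : seq 'I_n) d : d <= size s -> take d s = take d t -> d <= lcp s t.
Proof.
elim: s t d => [|x s IH] [|y t] [|d] //=.
move=> Hd [-> E]; rewrite eqxx ltnS; exact: IH.
Qed.

Lemma lcp_nth n (s t : seq 'I_n) x0 : lcp s t < size s -> lcp s t < size t ->
  nth x0 s (lcp s t) != nth x0 t (lcp s t).
Proof.
elim: s t => [|x s IH] [|y t] //=.
by case: eqP => [->|/eqP xy] //=; apply: IH.
Qed.

Lemma lcp_size n (s t : seq 'I_n) : lcp s t <= size t.
Proof. by elim: s t => [|x s IH] [|y t] //=; case: eqP => // _; rewrite ltnS IH. Qed.

Lemma lcp_sizel n (s t : seq 'I_n) : lcp s t <= size s.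
Proof. by elim: s t => [|x s IH] [|y t] //=; case: eqP => // _; rewrite ltnS IH. Qed.

Lemma reduced_nth n (s : seq 'I_n) x0 i : reducedb s -> i.+1 < size s ->
  nth x0 s i != nth x0 s i.+1.
Proof.
case: s => [|a s] //= /(pathP x0) H Hi.
exact: H.
Qed.

Lemma reduced_rev n (s : seq 'I_n) : reducedb s -> reducedb (rev s).
Proof.
rewrite /reducedb rev_sorted; apply: sub_sorted => a b /=; by rewrite eq_sym.
Qed.

Lemma reduced_take n (s : seq 'I_n) d : reducedb s -> reducedb (take d s).
Proof. exact: take_sorted. Qed.

Lemma reduced_drop n (s : seq 'I_n) d : reducedb s -> reducedb (drop d s).
Proof. exact: drop_sorted. Qed.

Lemma reduced_cat n (s : seq 'I_n) x b t : reducedb (rcons s x) -> reducedb (b :: t) ->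
  x != b -> reducedb (rcons s x ++ b :: t).
Proof.
case: s => [|a s] /=; first by move=> _ -> ->.
rewrite /reducedb /= cat_path last_rcons => -> /= -> ->.
by [].
Qed.

Lemma take_cat_le T (s1 s2 : seq T) d : d <= size s1 -> take d (s1 ++ s2) = take d s1.
Proof.
rewrite take_cat leq_eqVlt => /orP [/eqP->|->] //.
by rewrite ltnn subnn take0 cats0 take_size.
Qed.

Lemma rev_of_inv n (x : seq 'I_n) : reducedb x -> red (x ++ x) = [::] -> rev x = x.
Proof.
move=> Hx Hxx.
have E1 : red (x ++ (x ++ rev x)) = x.
  by rewrite -red_catr red_cancel_rev cats0 reduced_red_id.
have E2 : red ((x ++ x) ++ rev x) = rev x.
  by rewrite -red_catl Hxx /= reduced_red_id // reduced_rev.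
by rewrite -E2 -catA E1.
Qed.

Lemma odd_pal n (x : seq 'I_n) : reducedb x -> rev x = x -> x != [::] -> odd (size x).
Proof.
move=> Hx Hr; case: x Hx Hr => [|a x] //= Hx Hr _.
apply/negP => Hev.
set N := size (a :: x) in Hev.
have HN : N = N./2 + N./2.
  have := odd_double_half N; rewrite {1}/N /= Hev /= add0n -addnn => E.
  by rewrite {1}E.
have Hpos : 0 < N./2 by rewrite /N /= in HN *; lia.
have Hlt : N./2 < N by lia.
have := @reduced_nth _ (a :: x) a N./2.-1 Hx.
rewrite prednK // -/N.
move=> /(_ Hlt); apply/negP; rewrite negbK.
rewrite -{1}Hr nth_rev //.
rewrite -/N; apply/eqP; congr nth; rewrite -/N; try lia.
exact: leq_ltn_trans (leq_pred _) Hlt.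
Qed.

Lemma pal_drop n (s : seq 'I_n) d : rev s = s -> d <= size s ->
  drop (size s - d) s = rev (take d s).
Proof.
move=> Hr Hd.
transitivity (drop (size s - d) (rev s)); first by rewrite Hr.
rewrite drop_rev.
by congr (rev (take _ s)); lia.
Qed.

Lemma pal_det n (s t : seq 'I_n) h : rev s = s -> rev t = t ->
  size s = 2 * h + 1 -> size t = 2 * h + 1 -> take h.+1 s = take h.+1 t -> s = t.
Proof.
move=> Hs Ht Ss St E.
have D : forall u : seq 'I_n, rev u = u -> size u = 2 * h + 1 ->
    u = take h.+1 u ++ rev (take h (take h.+1 u)).
  move=> u Hu Su.
  rewrite take_takel // -pal_drop ?Su; last by lia.
  have -> : 2 * h + 1 - h = h.+1 by lia.
  by rewrite cat_take_drop.
  by [].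
by rewrite (D s) // (D t) // E.
Qed.

Lemma reduce_len n (s t : seq 'I_n) a b : rev s = s -> rev t = t ->
  size s = 2 * a + 1 -> size t = 2 * b + 1 -> a < b ->
  take a.+1 t = take a.+1 s -> size (red (s ++ t ++ s)) < size t.
Proof.
move=> Hs Ht Ss St ab E.
set T := take a.+1 s.
set D := drop a.+1 s.
have sTD : s = T ++ D by rewrite cat_take_drop.
have sDT : s = rev D ++ rev T by rewrite -rev_cat -sTD Hs.
set M := drop a.+1 t.
have tTM : t = T ++ M by rewrite /T -E cat_take_drop.
have SM : size M = 2 * b - a by rewrite size_drop St; lia.
have MZ : M = take (size M - a.+1) M ++ rev T.
  apply: (etrans (esym (cat_take_drop (size M - a.+1) M))); congr (_ ++ _).
  rewrite /M drop_drop.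
  have -> : size M - a.+1 + a.+1 = size t - a.+1 by rewrite SM St; lia.
  rewrite pal_drop // ?St; last by lia.
  by rewrite /T E.
set Z := take (size M - a.+1) M in MZ.
have -> : s ++ t ++ s = rev D ++ (rev T ++ T) ++ (Z ++ (rev T ++ T) ++ D).
  by rewrite {1}sDT tTM MZ sTD !catA.
rewrite (@red_congr _ (rev D) (Z ++ (rev T ++ T) ++ D) (rev T ++ T) [::]); last by rewrite red_rev_cancel.
rewrite /= catA (@red_congr _ (rev D ++ Z) D (rev T ++ T) [::]); last by rewrite red_rev_cancel.
apply: leq_ltn_trans (size_red _) _.
rewrite !size_cat size_rev /D size_drop Ss /Z size_take_min SM.
rewrite St /=; lia.
Qed.

Section Surv.
Variables (n : nat) (X : 'I_n -> seq 'I_n) (h : 'I_n -> nat).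
Hypothesis Xred : forall k, reducedb (X k).
Hypothesis Xpal : forall k, rev (X k) = X k.
Hypothesis Xsize : forall k, size (X k) = 2 * h k + 1.
Hypothesis XN : forall k l, k != l -> take (h k).+1 (X l) != take (h k).+1 (X k).

Lemma surv_step i j P : i != j -> reducedb P -> take (h j).+1 P = take (h j).+1 (X j) ->
  take (h i).+1 (red (X i ++ P)) = take (h i).+1 (X i) /\ size P < size (red (X i ++ P)).
Proof.
move=> ij HP HPj.
set s := X i.
set c := lcp s P.
have Hc := lcp_take s P; rewrite -/c in Hc.
have cP : c <= size P by apply: lcp_size.
have cs : c <= size s by apply: lcp_sizel.
have chj : c <= h j.
  rewrite leqNgt; apply/negP => lt.
  have ji : j != i by rewrite eq_sym.
  move: (XN ji) => /negP; apply.
  by rewrite -/s -(take_takel _ lt) Hc take_takel // HPj.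
have chi : c <= h i.
  rewrite leqNgt; apply/negP => lt.
  move: (XN ij) => /negP; apply.
  apply/eqP; symmetry; rewrite -/s -(take_takel _ lt) Hc take_takel //.
  rewrite -(@take_takel _ (h i).+1 (h j).+1 P) ?HPj ?take_takel //; lia.
set Y := drop c s.
have sY : s = rev Y ++ rev (take c s) by rewrite -rev_cat cat_take_drop /s Xpal.
have PW : P = take c s ++ drop c P by rewrite Hc cat_take_drop.
set Z := drop c P.
have RY : rev Y = take (size s - c) s.
  by rewrite /Y rev_drop /s Xpal.
have SY : size (rev Y) = size s - c by rewrite size_rev size_drop.
have Hs : size s = 2 * h i + 1 by apply: Xsize.
have Hred : red (s ++ P) = rev Y ++ Z.
  have -> : s ++ P = rev Y ++ (rev (take c s) ++ take c s) ++ Z by rewrite {1}sY {1}PW !catA.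
  rewrite (@red_congr _ (rev Y) Z _ [::]); last by rewrite red_rev_cancel.
  rewrite cat0s; apply: reduced_red_id.
  case EY : Y => [|y Y']; first by move: SY; rewrite EY /=; lia.
  rewrite rev_cons.
  case EZ : Z => [|z Z'].
    rewrite cats0 -rev_cons -EY; apply: reduced_rev; apply: reduced_drop; exact: Xred.
  apply: reduced_cat.
  - rewrite -rev_cons -EY; apply: reduced_rev; apply: reduced_drop; exact: Xred.
  - rewrite -EZ; exact: reduced_drop.
  have Hy : y = nth i s c by rewrite -[c]addn0 -nth_drop -/Y EY.
  have Hz : z = nth i P c by rewrite -[c]addn0 -nth_drop -/Z EZ.
  rewrite Hy Hz; apply: lcp_nth.
  + by rewrite -/c; lia.
  + rewrite -/c ltnNge; apply/negP => Hle.
    by move: EZ; rewrite /Z drop_oversize.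
rewrite Hred; split.
  rewrite take_cat_le ?RY ?take_takel //; rewrite ?size_take_min; lia.
by rewrite size_cat SY /Z size_drop; lia.
Qed.

Lemma survival g i : reducedb (i :: g) ->
  take (h i).+1 (red (flatten (map X (i :: g)))) = take (h i).+1 (X i) /\
  size (i :: g) <= size (red (flatten (map X (i :: g)))).
Proof.
elim: g i => [|j g IH] i Hg.
  by rewrite /= cats0 reduced_red_id // Xsize; split => //; lia.
move: Hg; rewrite reduced_cons => /andP [Hg ij].
have [IH1 IH2] := IH j Hg.
rewrite [map X _]/= [flatten _]/= -red_catr.
have [S1 S2] := surv_step ij (red_reduced _) IH1.
split => //.
exact: (leq_ltn_trans IH2 S2).
Qed.

End Surv.

Definition Xf n (f : W n -> W n) (k : 'I_n) : seq 'I_n := sval (f (wgen k)).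
Definition hf n (f : W n -> W n) (k : 'I_n) : nat := (size (Xf f k))./2.

Lemma aut_we n (f : W n -> W n) : is_aut f -> f (@we n) = @we n.
Proof.
case=> Hm _; apply: widem.
by rewrite -Hm; congr f; apply: W_eq.
Qed.

Lemma wgen_sq n (k : 'I_n) : wmul (wgen k) (wgen k) = @we n.
Proof. by apply: W_eq => /=; rewrite eqxx. Qed.

Lemma hom_sub n (f : W n -> W n) x : is_aut f -> f x = sub (Xf f) x.
Proof.
move=> Ha; have [Hm _] := Ha.
have H : forall s, f (mkW s) = mkW (flatten (map (Xf f) s)).
  elim => [|a s IH]; first exact: aut_we.
  rewrite mkW_cons Hm IH -(mkW_val (f (wgen a))) wmul_mkW.
  by [].
rewrite -{1}(mkW_val x) H.
by [].
Qed.

Lemma X_inv n (f : W n -> W n) k : is_aut f -> red (Xf f k ++ Xf f k) = [::].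
Proof.
move=> Ha; have [Hm _] := Ha.
have : wmul (f (wgen k)) (f (wgen k)) = @we n by rewrite -Hm wgen_sq aut_we.
by move/(f_equal (@sval _ _)).
Qed.

Lemma X_red n (f : W n -> W n) k : reducedb (Xf f k).
Proof. by rewrite /Xf; case: (f (wgen k)). Qed.

Lemma X_inj n (f : W n -> W n) : is_aut f -> injective (Xf f).
Proof.
move=> [_ [g fg _]] k l E.
have : wgen k = wgen l.
  rewrite -(fg (wgen k)) -(fg (wgen l)); congr g; exact: W_eq.
by move/(f_equal (@sval _ _)) => /= [].
Qed.

Lemma X_nil n (f : W n -> W n) k : is_aut f -> Xf f k != [::].
Proof.
move=> Ha; apply/eqP => E.
have [_ [g fg _]] := Ha.
have : wgen k = @we n.
  rewrite -(fg (wgen k)) -(fg (@we n)) aut_we //; congr g; exact: W_eq.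
by move/(f_equal (@sval _ _)).
Qed.

Lemma X_pal n (f : W n -> W n) k : is_aut f -> rev (Xf f k) = Xf f k.
Proof. by move=> Ha; apply: rev_of_inv; [apply: X_red | apply: X_inv]. Qed.

Lemma X_size n (f : W n -> W n) k : is_aut f -> size (Xf f k) = 2 * hf f k + 1.
Proof.
move=> Ha.
have Ho := odd_pal (X_red f k) (X_pal k Ha) (X_nil k Ha).
rewrite /hf; have := odd_double_half (size (Xf f k)); rewrite Ho -mul2n; lia.
Qed.

Lemma ncase n (f : W n -> W n) : is_aut f ->
  (forall k l, k != l -> take (hf f k).+1 (Xf f l) != take (hf f k).+1 (Xf f k)) ->
  exists p : {perm 'I_n}, forall x, f x = alpha_map p x.
Proof.
move=> Ha HN.
have gens : forall a, exists i, Xf f i = [:: a].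
  move=> a; have [_ [g fg gf]] := Ha.
  have E : f (g (wgen a)) = wgen a by apply: gf.
  rewrite (hom_sub _ Ha) in E.
  move: E; rewrite /sub; case E2 : (sval (g (wgen a))) => [|i l] /=.
    by move/(f_equal (@sval _ _)).
  move/(f_equal (@sval _ _)) => /= Hr.
  have Hg : reducedb (i :: l) by rewrite -E2; case: (g (wgen a)).
  have [_ S2] := survival (@X_red n f) (fun k => X_pal k Ha) (fun k => X_size k Ha) HN Hg.
  move: S2 Hr; case: l {E2 Hg} => [|j l].
    move=> _ Hr; exists i; move: Hr; rewrite /= cats0 reduced_red_id //; exact: X_red.
  by move=> S2 Hr; move: S2; rewrite [map _ _]/= [flatten _]/= Hr.
pose q a := odflt a [pick i | Xf f i == [:: a]].
have qP : forall a, Xf f (q a) = [:: a].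
  move=> a; rewrite /q; case: pickP => [i /eqP //|H].
  by have [i Hi] := gens a; move: (H i); rewrite Hi eqxx.
have qinj : injective q by move=> a b E; move: (qP a); rewrite E qP => [[]].
have [qi qK Kq] := injF_bij qinj.
pose p0 i := head i (Xf f i).
have Xp : forall i, Xf f i = [:: p0 i].
  by move=> i; rewrite /p0 -(Kq i) qP.
have p0inj : injective p0.
  by move=> i j E; apply: (X_inj Ha); rewrite !Xp E.
exists (perm p0inj) => x.
rewrite (hom_sub _ Ha) alphaE; apply: sub_ext => k.
by rewrite Xp permE.
Qed.

Lemma nonN n (f : W n -> W n) : is_aut f ->
  ~~ [forall k, forall l, (k != l) ==> (take (hf f k).+1 (Xf f l) != take (hf f k).+1 (Xf f k))] ->
  exists k l, k != l /\ size (red (Xf f k ++ Xf f l ++ Xf f k)) < size (Xf f l).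
Proof.
move=> Ha /forallPn [k /forallPn [l]]; rewrite negb_imply negbK => /andP [kl /eqP E].
have Pk := X_pal k Ha; have Pl := X_pal l Ha.
have Sk := X_size k Ha; have Sl := X_size l Ha.
case: (ltngtP (hf f k) (hf f l)) => H.
- by exists k, l; split => //; exact: (reduce_len Pk Pl Sk Sl H E).
- exists l, k; split; first by rewrite eq_sym.
  apply: (reduce_len Pl Pk Sl Sk H).
  have H2 : (hf f l).+1 <= (hf f k).+1 by lia.
  by rewrite -(take_takel (Xf f k) H2) -E take_takel.
- rewrite H in Sk E.
  have := pal_det Pk Pl Sk Sl (esym E) => /(X_inj Ha) kl'.
  by move: kl; rewrite kl' eqxx.
Qed.

Lemma comp_aut n (f : W n -> W n) k l : is_aut f -> k != l ->
  is_aut (fun x => f (sigma_map k l x)).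
Proof.
move=> [Hm Hb] kl; split.
  by move=> x y; rewrite !sigmaE sub_hom ?Hm //; apply: good_sig.
have Hs : bijective (sigma_map k l) by exists (sigma_map k l) => x; apply: sig_inv.
exact: (bij_comp Hb Hs).
Qed.

Lemma comp_X n (f : W n -> W n) k l j : is_aut f -> k != l ->
  Xf (fun x => f (sigma_map k l x)) j =
  if j == l then red (Xf f k ++ Xf f l ++ Xf f k) else Xf f j.
Proof.
move=> Ha kl; have [Hm _] := Ha.
rewrite /Xf sigmaE /wgen sub_mkW; last exact: good_sig.
rewrite /= /sigf; case: (eqVneq j l) => [E|jl]; first subst j.
  rewrite cats0 -[[:: k; l; k]]/([:: k] ++ [:: l] ++ [:: k]).
  rewrite -!wmul_mkW !Hm /=.
  by rewrite red_catr.
by rewrite cats0.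
Qed.

Definition mu n (f : W n -> W n) := \sum_(k < n) size (Xf f k).

Lemma mu_dec n (f : W n -> W n) k l : is_aut f -> k != l ->
  size (red (Xf f k ++ Xf f l ++ Xf f k)) < size (Xf f l) ->
  mu (fun x => f (sigma_map k l x)) < mu f.
Proof.
move=> Ha kl Hlt.
rewrite /mu (bigD1 l) //= [X in _ < X](bigD1 l) //=.
rewrite comp_X // eqxx.
under eq_bigr => j Hj do rewrite comp_X // (negbTE Hj).
by rewrite ltn_add2r.
Qed.

Definition inE m (f : W m.+2 -> W m.+2) := exists u, forall x, f x = ev u x.

Lemma inE_comp m (f g : W m.+2 -> W m.+2) : inE f -> inE g -> inE (fun x => f (g x)).
Proof. by move=> [u Hu] [v Hv]; exists (u ++ v) => x; rewrite ev_cat Hu Hv. Qed.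

Lemma inE_ext m (f g : W m.+2 -> W m.+2) : (forall x, f x = g x) -> inE g -> inE f.
Proof. by move=> E [u Hu]; exists u => x; rewrite E Hu. Qed.

Lemma inE_adj m (a b : 'I_m.+2) : nat_of_ord b = a + 1 -> inE (alpha_map (tperm a b)).
Proof.
move=> Hb; exists [:: b] => x /=.
rewrite genEs /=; last by rewrite Hb; lia.
have -> : (inord b.-1 : 'I_m.+2) = a by apply: val_inj; rewrite /= val_inord_pred Hb; lia.
by [].
Qed.

Lemma inE_alpha_step m d : forall a b : 'I_m.+2, nat_of_ord b = a + d.+1 ->
  inE (alpha_map (tperm a b)).
Proof.
elim: d => [|d IH] a b Hb; first exact: inE_adj.
have cb : (b.-1 < m.+2)%N by have := ltn_ord b; lia.
pose c : 'I_m.+2 := Ordinal cb.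
have Hc : nat_of_ord c = a + d.+1 by rewrite /= Hb; lia.
have bc : nat_of_ord b = c + 0.+1 by rewrite /= Hb; lia.
pose t := tperm c b.
have E : forall x, alpha_map (tperm a b) x = alpha_map t (alpha_map (tperm a c) (alpha_map t x)).
  move=> x; rewrite !alpha_comp; congr alpha_map.
  have : (tperm a c ^ t)%g = tperm (t a) (t c) by apply: tpermJ.
  rewrite /t tpermL tpermD; last first.
  - by apply: ord_neq; lia.
  - by apply: ord_neq; lia.
  by rewrite conjgE tpermV mulgA => ->.
apply: (inE_ext E); apply: inE_comp; first by apply: inE_adj; lia.
apply: inE_comp; [exact: IH | by apply: inE_adj; lia].
Qed.

Lemma inE_tperm m (a b : 'I_m.+2) : inE (alpha_map (tperm a b)).
Proof.
have key : forall a b : 'I_m.+2, nat_of_ord a < b -> inE (alpha_map (tperm a b)).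
  move=> a' b' lt; apply: (@inE_alpha_step _ (b' - a').-1); lia.
case: (ltngtP (nat_of_ord a) (nat_of_ord b)) => H.
- exact: key.
- by rewrite tpermC; apply: key.
- have -> : a = b by apply: val_inj.
  by rewrite tperm1; exists [::] => x; rewrite alpha1.
Qed.

Lemma inE_alpha m (p : {perm 'I_m.+2}) : inE (alpha_map p).
Proof.
have [ts -> _] := prod_tpermP p.
elim: ts => [|t ts IH].
  by rewrite big_nil; exists [::] => x; rewrite alpha1.
rewrite big_cons.
apply: (@inE_ext _ _ (fun x => alpha_map (\prod_(t <- ts) tperm t.1 t.2)%g (alpha_map (tperm t.1 t.2) x))).
  by move=> x; rewrite alpha_comp.
by apply: inE_comp => //; apply: inE_tperm.
Qed.

Lemma inE_sigma m (k l : 'I_m.+2) : k != l -> inE (sigma_map k l).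
Proof.
move=> kl.
pose q := tperm ord0 k.
pose r := tperm (inord 1) (q l).
pose p := (r * q)%g.
have ql0 : q l != ord0.
  apply/eqP => E; move: (congr1 q E); rewrite tpermK /q tpermL => E2.
  by move: kl; rewrite E2 eqxx.
have p0 : p ord0 = k.
  rewrite /p permM /r tpermD //; first by rewrite /q tpermL.
  by rewrite eq_sym ord0_one.
have p1 : p (inord 1) = l by rewrite /p permM /r tpermL /q tpermK.
apply: (@inE_ext _ _ (fun x => alpha_map p (sigma_map ord0 (inord 1) (alpha_map p^-1 x)))).
  by move=> x; rewrite alpha_sig p0 p1 alpha_comp mulVg alpha1.
apply: inE_comp; first exact: inE_alpha.
apply: inE_comp; last exact: inE_alpha.
by exists [:: ord0] => x /=; rewrite genE0.
Qed.

Lemma part3 m (f : W m.+2 -> W m.+2) : is_aut f -> inE f.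
Proof.
move=> Ha.
suff H : forall N (g : W m.+2 -> W m.+2), is_aut g -> mu g < N -> inE g.
  exact: (H (mu f).+1).
elim => [|N IH] g Hg Hmu //.
case: (boolP [forall k, forall l, (k != l) ==>
   (take (hf g k).+1 (Xf g l) != take (hf g k).+1 (Xf g k))]) => HN.
  have [p Hp] : exists p : {perm 'I_m.+2}, forall x, g x = alpha_map p x.
    apply: ncase => // k l kl.
    by move/forallP: HN => /(_ k) /forallP /(_ l); rewrite kl.
  by apply: (inE_ext Hp); apply: inE_alpha.
have [k [l [kl Hlt]]] := nonN Hg HN.
have Hg' := comp_aut Hg kl.
have Hmu' := mu_dec Hg kl Hlt.
have [u Hu] : inE (fun x => g (sigma_map k l x)) by apply: IH => //; lia.
have [w Hw] := inE_sigma kl.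
exists (u ++ w) => x.
by rewrite ev_cat -Hw -Hu sig_inv.
Qed.


Theorem corollary2p2 (m : nat) :
  (* images of generators are automorphisms of W_n, n = m+2 *)
  (forall k : 'I_m.+2, is_aut (gen_img k)) /\
  (* the assignment respects the defining relations of G (so it extends to
     a homomorphism G -> Aut(W_n)) *)
  (forall u v : seq 'I_m.+2, cox_eq u v -> forall x, ev u x = ev v x) /\
  (* surjectivity *)
  (forall f : W m.+2 -> W m.+2, is_aut f ->
     exists u : seq 'I_m.+2, forall x, f x = ev u x) /\
  (* the subgroup generated by sigma_12 and alpha_(i,i+1), i = 2..n-1
     (images of t_0 and t_k, k >= 2) is finite *)
  (exists L : seq (W m.+2 -> W m.+2),
     forall u : seq 'I_m.+2, (forall k, k \in u -> val k != 1) ->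
       exists2 i, i < size L & forall x, ev u x = nth id L i x).
Proof.
split; first exact: part1.
split; first exact: part2.
split; first exact: part3.
exact: part4.
Qed.
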